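(* Let $\mathcal{P}\subset\mathbb{R}^d$ be a polytope (cage) with $K$ vertices $v_1,\dots,v_K$, and let $\alpha=(\alpha_1,\dots,\alpha_K)^\top:\mathcal{P}\to\mathbb{R}^K$ be any valid generalized barycentric coordinate function for $\mathcal{P}$. Then for every $x\in\mathcal{P}$, the vector $\alpha(x)$ is a convex combination of simplex barycentric coordinate vectors $\alpha(x;\mathcal{P},T)$, where $T$ ranges over the simplices whose vertices are cage vertices of $\mathcal{P}$; that is, there exist weights $w_T(x)\ge 0$ with $\sum_T w_T(x)=1$ such that $\alpha(x)=\sum_T w_T(x)\,\alpha(x;\mathcal{P},T)$.
   Context: A function $\alpha:\mathcal{P}\to\mathbb{R}^K$ is a valid generalized barycentric coordinate function for $\mathcal{P}$ if for all $x\in\mathcal{P}$: (non-negativity) $\alpha_i(x)\ge 0$ for all $i$; (partition of unity) $\sum_i\alpha_i(x)=1$; (reproduction) $\sum_i \alpha_i(x)\,v_i = x$; and (Lagrange property) $\alpha_i(v_j)=\delta_{ij}$ for all $i,j$. For a non-degenerate (nonzero volume) simplex $T$ in $\mathbb{R}^d$ with vertex set $\{v_{l_0},\dots,v_{l_d}\}\subseteq\{v_1,\dots,v_K\}$ containing $x$, the simplex barycentric coordinates $\alpha(x;T)\in\mathbb{R}^{d+1}$ are the unique solution $\lambda$ of $\sum_{k}\lambda_k v_{l_k}=x$, $\sum_k\lambda_k=1$; the cage coordinates due to $T$, $\alpha(x;\mathcal{P},T)\in\mathbb{R}^K$, have entry $i$ equal to the simplex coordinate of $x$ associated with $v_i$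 if $v_i$ is a vertex of $T$, and $0$ otherwise. *)

(* Defs.v *)
From HB Require Import structures.
From mathcomp Require Import all_boot all_order all_algebra.
From Stdlib Require Import ClassicalEpsilon.
Set Implicit Arguments. Unset Strict Implicit. Unset Printing Implicit Defensive.
Import Order.TTheory GRing.Theory Num.Theory.
Local Open Scope ring_scope.

Section Cage.
Variables (R : realFieldType) (d K : nat) (v : 'I_K -> 'rV[R]_d).

Definition in_hull (S : {set 'I_K}) (x : 'rV[R]_d) : Prop :=
  exists lam : 'I_K -> R,
    [/\ forall i, 0 <= lam i, forall i, i \notin S -> lam i = 0,
        \sum_i lam i = 1 & \sum_i lam i *: v i = x].

Definition in_cage (x : 'rV[R]_d) : Prop := in_hull setT x.

Definition extreme_point (p : 'rV[R]_d) : Prop :=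
  in_cage p /\
  forall (a b : 'rV[R]_d) (t : R), in_cage a -> in_cage b -> 0 < t < 1 ->
    p = t *: a + (1 - t) *: b -> a = p /\ b = p.

Definition polytope_vertices : Prop :=
  injective v /\ (forall i, extreme_point (v i)).

Definition full_dimensional : Prop :=
  forall y : 'rV[R]_d, exists c : 'I_K -> R,
    \sum_i c i = 1 /\ \sum_i c i *: v i = y.

Definition valid_gbc (alpha : 'rV[R]_d -> 'I_K -> R) : Prop :=
  [/\ forall x, in_cage x -> forall i, 0 <= alpha x i,
      forall x, in_cage x -> \sum_i alpha x i = 1,
      forall x, in_cage x -> \sum_i alpha x i *: v i = x
    & forall i j, alpha (v j) i = (i == j)%:R].

Definition nondeg_simplex (S : {set 'I_K}) : Prop :=
  #|S| = d.+1 /\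
  forall c : 'I_K -> R, (forall i, i \notin S -> c i = 0) ->
    \sum_i c i = 0 -> \sum_i c i *: v i = 0 -> forall i, c i = 0.

Definition is_cage_coords (S : {set 'I_K}) (x : 'rV[R]_d) (c : 'I_K -> R) :
  Prop :=
  [/\ forall i, i \notin S -> c i = 0, \sum_i c i = 1 &
      \sum_i c i *: v i = x].

(* alpha(x; P, T): the (unique, for non-degenerate T) solution *)
Definition cage_coords (S : {set 'I_K}) (x : 'rV[R]_d) : 'I_K -> R :=
  epsilon (inhabits (fun _ : 'I_K => 0)) (is_cage_coords S x).

End Cage.

(* Main.v *)
Require Import Defs.
From mathcomp Require Import all_boot all_order all_algebra.
From mathcomp Require Import ring lra.
From Stdlib Require Import Classical ClassicalEpsilon.
Set Implicit Arguments. Unset Strict Implicit. Unset Printing Implicit Defensive.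
Import Order.TTheory GRing.Theory Num.Theory.
Local Open Scope ring_scope.
Section Gen.
Variables (F : fieldType) (vT : vectType F) (K : nat) (u : 'I_K -> vT).

Definition Pind (s : seq 'I_K) := forall c : 'I_K -> F,
  (forall i, i \notin s -> c i = 0) -> \sum_i c i *: u i = 0 -> forall i, c i = 0.

Lemma span_coef (s : seq 'I_K) y : y \in <<map u s>>%VS ->
  exists c : 'I_K -> F, (forall i, i \notin s -> c i = 0) /\ y = \sum_i c i *: u i.
Proof.
elim: s y => [|j s IH] y /=.
  rewrite span_nil memv0 => /eqP ->; exists (fun _ => 0); split => //.
  by rewrite big1 // => i _; rewrite scale0r.
rewrite span_cons => /memv_addP [y1 /vlineP [k ->] [z /IH [c [Hc ->]] ->]].
exists (fun i => c i + (i == j)%:R * k); split.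
  move=> i; rewrite in_cons negb_or => /andP [/negPf -> /Hc ->].
  by rewrite mul0r addr0.
rewrite [RHS](eq_bigr (fun i => c i *: u i + ((i == j)%:R * k) *: u i)); last first.
  by move=> i _; rewrite scalerDl.
rewrite big_split /= addrC; congr (_ + _).
rewrite (bigD1 j) //= eqxx mul1r big1 ?addr0 // => i /negPf ->.
by rewrite mul0r scale0r.
Qed.

Lemma gen_free (s : seq 'I_K) : uniq s -> free (map u s) <-> Pind s.
Proof.
elim: s => [|j s IH] /=.
  move=> _; split => [_ c Hc _ i|_]; [exact: Hc | exact: nil_free].
move=> /andP [js us]; rewrite free_cons; have {}IH := IH us.
split.
  move=> /andP [nin /IH Ps] c Hc Hsum.
  have cj : c j = 0.
    apply/eqP; apply/negPn/negP => cj0; move/negP: nin; apply.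
    have -> : u j = - (c j)^-1 *: \sum_(i | i != j) c i *: u i.
      move: Hsum; rewrite (bigD1 j) //= => /eqP; rewrite addr_eq0 => /eqP H.
      by rewrite scaleNr -scalerN -H scalerA mulVf // scale1r.
    apply: memvZ; apply: memv_suml => i ij.
    case: (boolP (i \in s)) => [iS|nis].
      by apply: memvZ; apply: memv_span; apply: map_f.
    by rewrite Hc ?scale0r ?mem0v // in_cons negb_or ij.
  apply: Ps Hsum => i nis; case: (eqVneq i j) => [-> //|ij].
  by apply: Hc; rewrite in_cons negb_or ij.
move=> P; apply/andP; split; last first.
  apply/IH => c Hc; apply: P => i; rewrite in_cons negb_or => /andP [_]; exact: Hc.
apply/negP => /span_coef [c [Hc Hy]].
have := P (fun i => c i - (i == j)%:R).
have cj : c j = 0 by apply: Hc.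
move=> /(_ _ _ j); rewrite cj eqxx sub0r => H.
have : (- 1 : F) = 0.
  apply: H.
    move=> i; rewrite in_cons negb_or => /andP [/negPf -> /Hc ->].
    by rewrite subr0.
  rewrite (eq_bigr (fun i => c i *: u i - (i == j)%:R *: u i)); last first.
    by move=> i _; rewrite scalerBl.
  rewrite sumrB -Hy (bigD1 j) //= eqxx scale1r big1 ?addr0 ?subrr // => i /negPf ->.
  by rewrite scale0r.
by move/eqP; rewrite oppr_eq0 oner_eq0.
Qed.
End Gen.

Section Main.
Variables (R : realFieldType) (d K : nat) (v : 'I_K -> 'rV[R]_d).

Definition indep (S : {set 'I_K}) := forall c : 'I_K -> R,
  (forall i, i \notin S -> c i = 0) ->
  \sum_i c i = 0 -> \sum_i c i *: v i = 0 -> forall i, c i = 0.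

Definition u (i : 'I_K) : 'rV[R]_(1 + d) := row_mx (1%:M) (v i).

Lemma sum_u (c : 'I_K -> R) :
  \sum_i c i *: u i = row_mx (\sum_i c i)%:M (\sum_i c i *: v i).
Proof.
rewrite -[LHS]hsubmxK; congr row_mx.
  rewrite !raddf_sum /=; apply: eq_bigr => i _.
  by rewrite linearZ /= row_mxKl scale_scalar_mx mulr1.
by rewrite raddf_sum; apply: eq_bigr => i _; rewrite /u scale_row_mx /= row_mxKr.
Qed.

Lemma sum_u_eq0 (c : 'I_K -> R) :
  \sum_i c i *: u i = 0 <-> \sum_i c i = 0 /\ \sum_i c i *: v i = 0.
Proof.
rewrite sum_u; split.
  move/eqP; rewrite row_mx_eq0 => /andP [/eqP H1 /eqP H2]; split => //.
  by have := congr1 (fun M : 'M_1 => M 0 0) H1; rewrite /= !mxE eqxx mulr1n.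
by case=> -> ->; apply/eqP; rewrite row_mx_eq0 eqxx andbT; apply/eqP/matrixP => a b; rewrite !mxE mul0rn.
Qed.

Lemma indep_free S : indep S <-> free (map u (enum S)).
Proof.
rewrite gen_free ?enum_uniq //; split.
  move=> H c Hc /sum_u_eq0 [H1 H2]; apply: H H1 H2 => i Hi; apply: Hc.
  by rewrite mem_enum.
move=> H c Hc H1 H2; apply: H; last by apply/sum_u_eq0.
by move=> i; rewrite mem_enum; apply: Hc.
Qed.


Lemma extension S0 : full_dimensional v -> indep S0 ->
  exists S : {set 'I_K}, S0 \subset S /\ nondeg_simplex v S.
Proof.
move=> FD /indep_free fr0.
pose P := fun S : {set 'I_K} => (S0 \subset S) && free (map u (enum S)).
have P0 : P S0 by rewrite /P subxx fr0.
case: (@arg_maxnP _ S0 P (fun S : {set 'I_K} => #|S|) P0) => S /andP [sub frS] maxS.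
exists S; split => //; split; last by apply/indep_free.
have Hspan : forall j, u j \in <<map u (enum S)>>%VS.
  move=> j; case: (boolP (j \in S)) => jS.
    by apply: memv_span; apply: map_f; rewrite mem_enum.
  apply/negPn/negP => nin.
  have : P (j |: S).
    rewrite /P (subset_trans sub (subsetU1 _ _)) /=.
    rewrite (perm_free (perm_map u (_ : perm_eq _ (j :: enum S)))).
      by rewrite /= free_cons nin frS.
    apply: uniq_perm; first exact: enum_uniq.
      by rewrite /= mem_enum jS enum_uniq.
    by move=> k; rewrite in_cons !mem_enum in_setU1.
  by move/maxS; rewrite cardsU1 jS /geq /= add1n ltnn.
have Hsum : forall c : 'I_K -> R, \sum_i c i *: u i \in <<map u (enum S)>>%VS.
  by move=> c; apply: memv_suml => i _; apply: memvZ.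
have Hfull : (fullv <= <<map u (enum S)>>)%VS.
  apply/subvP => z _.
  have [c [c1 cv]] := FD (rsubmx z).
  have [e [e1 ev]] := FD 0.
  have -> : z = \sum_i c i *: u i + (lsubmx z 0 0 - 1) *: \sum_i e i *: u i.
    rewrite !sum_u c1 cv e1 ev scale_row_mx add_row_mx scaler0 addr0.
    rewrite -[LHS]hsubmxK; congr row_mx.
    apply/matrixP => a b; rewrite !ord1 !mxE eqxx mulr1n.
    ring.
  by apply: memvD; [apply: Hsum | apply: memvZ; apply: Hsum].
have h1 := dimvS Hfull.
have h2 := dimvS (subvf <<map u (enum S)>>).
rewrite dimvf dim_matrix (eqP frS) size_map -cardE in h1 h2.
move: h1 h2; rewrite mul1r add1n => h1 h2. by apply/eqP; rewrite eqn_leq h1 h2.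
Qed.


Definition feas x (lam : 'I_K -> R) :=
  [/\ forall i, 0 <= lam i, \sum_i lam i = 1 & \sum_i lam i *: v i = x].
Definition supp (lam : 'I_K -> R) := [set i | lam i != 0].
Definition Rep x (lam : 'I_K -> R) := exists w : {set 'I_K} -> R,
    [/\ forall T, 0 <= w T,
        forall T, w T != 0 -> nondeg_simplex v T /\ in_hull v T x,
        \sum_T w T = 1
      & forall i, lam i = \sum_T w T * cage_coords v T x i].

Lemma cage_coordsE S x lam : indep S -> is_cage_coords v S x lam ->
  forall i, cage_coords v S x i = lam i.
Proof.
move=> ind Hl.
have Hc : is_cage_coords v S x (cage_coords v S x).
  by rewrite /cage_coords; apply: epsilon_spec; exists lam.
case: Hc => c0 c1 cv; case: Hl => l0 l1 lv.
move=> i; apply/eqP; rewrite -subr_eq0; apply/eqP; move: i.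
apply: (ind (fun i => cage_coords v S x i - lam i)).
- by move=> i Hi; rewrite c0 ?l0 ?subrr.
- by rewrite sumrB c1 l1 subrr.
- rewrite (eq_bigr (fun i => cage_coords v S x i *: v i - lam i *: v i)).
    by rewrite sumrB cv lv subrr.
  by move=> i _; rewrite scalerBl.
Qed.

Lemma rep_ext x a b : (forall i, a i = b i) -> Rep x a -> Rep x b.
Proof.
by move=> E [w [w0 wS w1 wE]]; exists w; split => // i; rewrite -E.
Qed.

Lemma rep_comb x a b t : Rep x a -> Rep x b -> 0 <= t -> 0 <= 1 - t ->
  Rep x (fun i => t * a i + (1 - t) * b i).
Proof.
move=> [wa [wa0 waS wa1 waE]] [wb [wb0 wbS wb1 wbE]] t0 t1.
exists (fun T => t * wa T + (1 - t) * wb T); split.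
- by move=> T; rewrite addr_ge0 // mulr_ge0.
- move=> T HT; case: (eqVneq (wa T) 0) => [Ha|Ha]; last exact: waS.
  case: (eqVneq (wb T) 0) => [Hb|Hb]; last exact: wbS.
  by move: HT; rewrite Ha Hb !mulr0 addr0 eqxx.
- by rewrite big_split /= -!mulr_sumr wa1 wb1 !mulr1 addrC subrK.
- move=> i; rewrite waE wbE !mulr_sumr -big_split /=; apply: eq_bigr => T _.
  ring.
Qed.

Lemma rep_base x lam : full_dimensional v -> feas x lam -> indep (supp lam) ->
  Rep x lam.
Proof.
move=> FD [l0 l1 lv] ind.
have [S [sub [cardS indS]]] := extension FD ind.
have Hl : is_cage_coords v S x lam.
  split => // i iS; apply/eqP/negPn/negP => li; move/negP: iS; apply.
  by apply: (subsetP sub); rewrite inE.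
exists (fun T => (T == S)%:R); split.
- by move=> T; rewrite ler0n.
- move=> T; case: (eqVneq T S) => [-> _|_]; last by rewrite eqxx.
  split; first by split.
  by exists lam; case: Hl => Hs _ _; split.
- by rewrite (bigD1 S) //= eqxx big1 ?addr0 // => T /negPf ->.
- move=> i; rewrite (bigD1 S) //= eqxx mul1r big1 ?addr0.
    by rewrite (cage_coordsE indS Hl).
  by move=> T /negPf ->; rewrite mul0r.
Qed.

Lemma step x lam c : feas x lam -> (forall i, i \notin supp lam -> c i = 0) ->
  \sum_i c i = 0 -> \sum_i c i *: v i = 0 -> (exists i, c i < 0) ->
  exists s, 0 < s /\ feas x (fun i => lam i + s * c i) /\
    (#|supp (fun i => (lam i + s * c i)%R)| < #|supp lam|)%N.
Proof.
move=> [l0 l1 lv] Hc c0 cv [i0 ci0].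
pose F := fun i => lam i / - c i.
case: (arg_minP (P := fun i => c i < 0) F ci0) => j cj Hmin.
have ljn : lam j != 0.
  by apply/negP => /eqP lj; move: cj; rewrite Hc ?ltxx // inE lj eqxx.
have ljp : 0 < lam j by rewrite lt0r ljn l0.
have ncj : 0 < - c j by rewrite oppr_gt0.
have Fp : 0 < F j by rewrite divr_gt0.
exists (F j); split => //; split; [split|].
- move=> k; case: (ltrP (c k) 0) => ck; last by rewrite addr_ge0 // mulr_ge0 // ltW.
  have nck : 0 <= - c k by rewrite oppr_ge0 ltW.
  have := Hmin k ck => /(ler_wpM2r nck).
  rewrite /F divfK; last by rewrite oppr_eq0 lt_eqF.
  by rewrite -subr_ge0 mulrN opprK.
- by rewrite big_split /= -mulr_sumr c0 mulr0 addr0 l1.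
- rewrite (eq_bigr (fun i => lam i *: v i + F j *: (c i *: v i))).
    by rewrite big_split /= -scaler_sumr cv scaler0 addr0 lv.
  by move=> i _; rewrite scalerDl scalerA.
- apply: proper_card; apply/properP; split.
    apply/subsetP => k; rewrite !inE => H; apply/negP => /eqP lk; move: H.
    by rewrite lk Hc ?inE ?lk ?eqxx // mulr0 addr0 eqxx.
  exists j; rewrite !inE //; apply/negPn/eqP; rewrite /F.
  by field; rewrite lt_eqF.
Qed.

Lemma nonzero_neg (c : 'I_K -> R) i0 : \sum_i c i = 0 -> c i0 != 0 ->
  exists i, c i < 0.
Proof.
move=> c0 ci0; apply: NNPP => H.
have Hp : forall i, 0 <= c i.
  move=> i; rewrite leNgt; apply/negP => ci; apply: H; by exists i.
by move/eqP: ci0; apply; apply: (psumr_eq0P (P:=xpredT)) => // i _ ; exact: Hp.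
Qed.

Lemma rep_all x : full_dimensional v ->
  forall n lam, (#|supp lam| < n)%N -> feas x lam -> Rep x lam.
Proof.
move=> FD; elim=> [|n IH] lam Hn Hf; first by rewrite ltn0 in Hn.
case: (classic (indep (supp lam))) => [ind|nind]; first exact: rep_base.
have [c [Hc [c0 [cv [i0 ci0]]]]] : exists c : 'I_K -> R,
    (forall i, i \notin supp lam -> c i = 0) /\ \sum_i c i = 0 /\
    \sum_i c i *: v i = 0 /\ exists i, c i != 0.
  apply: NNPP => H; apply: nind => c Hc c0 cv i; apply: NNPP => ci; apply: H.
  by exists c; do !split => //; exists i; apply/eqP.
have [s1 [s1p [fa ca]]] := step Hf Hc c0 cv (nonzero_neg c0 ci0).
have Hc' : forall i, i \notin supp lam -> - c i = 0.
  by move=> i Hi; rewrite Hc // oppr0.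
have c0' : \sum_i - c i = 0 by rewrite sumrN c0 oppr0.
have cv' : \sum_i - c i *: v i = 0.
  by rewrite (eq_bigr (fun i => - (c i *: v i))) ?sumrN ?cv ?oppr0 // => i _; rewrite scaleNr.
have ci0' : - c i0 != 0 by rewrite oppr_eq0.
have [s2 [s2p [fb cb]]] := step Hf Hc' c0' cv' (nonzero_neg c0' ci0').
have s12 : s1 + s2 != 0 by rewrite gt_eqF // addr_gt0.
pose t := s2 / (s1 + s2).
have t1 : 1 - t = s1 / (s1 + s2) by rewrite /t; field.
apply: (rep_ext (a := fun i => t * (lam i + s1 * c i) + (1 - t) * (lam i + s2 * - c i))).
  by move=> i; rewrite t1 /t; field.
apply: rep_comb.
- by apply: IH fa; apply: leq_trans ca Hn.
- by apply: IH fb; apply: leq_trans cb Hn.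
- by rewrite divr_ge0 // ltW // addr_gt0.
- by rewrite t1 divr_ge0 // ltW // addr_gt0.
Qed.

End Main.

Theorem proposition1 (R : realFieldType) (d K : nat)
    (v : 'I_K -> 'rV[R]_d) (alpha : 'rV[R]_d -> 'I_K -> R) :
  polytope_vertices v -> full_dimensional v -> valid_gbc v alpha ->
  forall x : 'rV[R]_d, in_cage v x ->
  exists w : {set 'I_K} -> R,
    [/\ forall T, 0 <= w T,
        forall T, w T != 0 -> nondeg_simplex v T /\ in_hull v T x,
        \sum_T w T = 1
      & forall i, alpha x i = \sum_T w T * cage_coords v T x i].
Proof.
move=> _ FD [a0 a1 av _] x Hx.
have Hf : feas v x (alpha x) by split; [apply: a0 | apply: a1 | apply: av].
exact: (rep_all FD (ltnSn _) Hf).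
Qed.
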